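(* Consider the system $\dot{x} = f(x) + F(x)\theta + g(x)u$ with state $x\in\mathbb{R}^n$, input $u\in\mathbb{R}^m$ and constant unknown parameter vector $\theta\in\mathbb{R}^p$, where $f:\mathbb{R}^n\to\mathbb{R}^n$, $F:\mathbb{R}^n\to\mathbb{R}^{n\times p}$, $g:\mathbb{R}^n\to\mathbb{R}^{n\times m}$ are locally Lipschitz with $f(0)=0$ and $F(0)=0$. Let $\hat\theta\in\mathbb{R}^p$ be a parameter estimate, $\tilde\theta := \theta-\hat\theta$, so that the system reads $\dot{x} = f(x) + F(x)\hat{\theta} + g(x)u + F(x)\tilde{\theta}$. Suppose the estimate evolves according to an update law $\dot{\hat\theta}=\tau(\hat\theta,t)$, with $\tau$ locally Lipschitz in its first argument and piecewise continuous in its second, and suppose there is a function $V_\theta:\mathbb{R}^p\times\mathbb{R}_{\ge0}\to\mathbb{R}_{\ge0}$, continuously differentiable in both arguments, and constants $\eta_1,\eta_2,\eta_3>0$, $T\ge 0$ such that (i) $\eta_1\|\tilde\theta\|^2\le V_\theta(\tilde\theta,t)\le\eta_2\|\tilde\theta\|^2$ for all $(\tilde\theta,t)\in\mathbb{R}^p\times\mathbb{R}_{\ge0}$; (ii) $\dot V_\theta(\tilde\theta,t)\le 0$ for all $(\tilde\theta,t)\in\mathbb{R}^p\times\mathbb{R}_{\ge0}$; (iii) $\dot V_\theta(\tilde\theta,t)\le -\eta_3\|\tilde\theta\|^2$ for all $(\tilde\theta,t)\in\mathbb{R}^p\times\mathbb{R}_{\ge T}$, where $\dot V_\theta$ denotes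 the time derivative of $V_\theta$ along the estimation error dynamics $\dot{\tilde\theta}=-\tau(\theta-\tilde\theta,t)$. Suppose $V:\mathbb{R}^n\to\mathbb{R}_{\ge0}$ is an eISS-CLF (defined in the context) with constants $c_1,c_2,c_3,\varepsilon>0$. Then any controller $u=k(x,\hat\theta)$, $k:\mathbb{R}^n\times\mathbb{R}^p\to\mathbb{R}^m$ locally Lipschitz on $(\mathbb{R}^n\setminus\{0\})\times\mathbb{R}^p$, satisfying $$L_fV(x)+L_FV(x)\hat\theta+L_gV(x)k(x,\hat\theta)\le -c_3V(x)-\tfrac{1}{\varepsilon}\|L_FV(x)\|^2\quad\text{for all }(x,\hat\theta)\in\mathbb{R}^n\times\mathbb{R}^p,$$ renders the closed-loop system $\dot{x} = f(x) + F(x)\hat{\theta} + g(x)k(x,\hat\theta) + F(x)\tilde{\theta}$ exponentially input-to-state stable (eISS) with respect to $\tilde\theta$. Furthermore, $\lim_{t\to\infty}x(t)=0$.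
   Context: $\|\cdot\|$ is the Euclidean norm; $\mathcal{L}_\infty$ denotes bounded functions with $\|d\|_\infty=\sup_{t\ge0}\|d(t)\|$. For a continuously differentiable $V$ and vector field (or matrix of vector fields) $f$, $L_fV(x)=\nabla V(x)f(x)$ with $\nabla V(x)$ a row vector. A continuously differentiable positive definite $V:\mathbb{R}^n\to\mathbb{R}_{\ge0}$ is an exponential input-to-state stable control Lyapunov function (eISS-CLF) if there exist $c_1,c_2,c_3,\varepsilon>0$ with $c_1\|x\|^2\le V(x)\le c_2\|x\|^2$ for all $x$, and $\inf_{u\in\mathbb{R}^m}\big(L_fV(x)+L_FV(x)\hat\theta+L_gV(x)u\big)< -c_3V(x)-\tfrac1\varepsilon\|L_FV(x)\|^2$ for all $(x,\hat\theta)\in(\mathbb{R}^n\setminus\{0\})\times\mathbb{R}^p$. The closed-loop system is exponentially ISS (eISS) if there are constants $c,\lambda>0$ and $\iota\in\mathcal{K}_\infty$ such that for each initial condition $x(0)$ and each $\tilde\theta(\cdot)\in\mathcal{L}_\infty$, the trajectory satisfies $\|x(t)\|\le c\|x(0)\|e^{-\lambda t}+\iota(\|\tilde\theta\|_\infty)$ for all $t\ge0$. $\mathcal{K}_\infty$: continuous, strictly increasing functions $\alpha:\mathbb{R}_{\ge0}\to\mathbb{R}_{\ge0}$ with $\alpha(0)=0$ and $\alpha(r)\to\infty$ as $r\to\infty$. *)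

(* Defs.v *)
From HB Require Import structures.
From mathcomp Require Import all_boot all_order all_algebra.
From mathcomp Require Import all_classical all_reals all_analysis.
Set Implicit Arguments. Unset Strict Implicit. Unset Printing Implicit Defensive.
Import Order.TTheory GRing.Theory Num.Theory.
Import numFieldNormedType.Exports.
Local Open Scope classical_set_scope.
Local Open Scope ring_scope.

Section Defs.
Variable R : realType.

Definition enorm (a b : nat) (M : 'M[R]_(a, b)) : R :=
  Num.sqrt (\sum_(i < a) \sum_(j < b) (M i j) ^+ 2).

Definition scal (M : 'M[R]_1) : R := M 0 0.

Definition C1 (U : normedModType R) (h : U -> R) : Prop :=
  (forall x, differentiable h x) /\ (forall v : U, continuous (fun x => 'd h x v)).

Definition grad (n : nat) (V : 'cV[R]_n -> R) (x : 'cV[R]_n) : 'rV[R]_n :=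
  \row_i ('d V x (delta_mx i 0 : 'cV[R]_n)).

Definition LieV (n k : nat) (V : 'cV[R]_n -> R) (h : 'cV[R]_n -> 'M[R]_(n, k))
  (x : 'cV[R]_n) : 'rV[R]_k := grad V x *m h x.

Definition loc_lipschitz_on (U W : normedModType R) (A : set U) (h : U -> W) : Prop :=
  forall x, A x -> exists2 d : R, 0 < d & exists L : R, forall y z,
    A y -> A z -> `|y - x| < d -> `|z - x| < d -> `|h y - h z| <= L * `|y - z|.

Definition pw_continuous (W : normedModType R) (h : R -> W) : Prop :=
  forall b : R, exists s : seq R,
    (forall t : R, 0 <= t <= b -> t \notin s -> {for t, continuous h}) /\
    (forall t, t \in s -> (exists l : W, h x @[x --> t^'-] --> l) /\
                          (exists l : W, h x @[x --> t^'+] --> l)).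

(* class K_infinity (functions on R>=0, extended arbitrarily to R) *)
Definition K_inf (a : R -> R) : Prop :=
  a 0 = 0 /\ {within [set r | 0 <= r], continuous a} /\
  (forall r s, 0 <= r -> r < s -> a r < a s) /\
  (forall M, exists r, 0 <= r /\ M < a r).

Definition eISS_CLF (n m p : nat) (f : 'cV[R]_n -> 'cV[R]_n)
  (F : 'cV[R]_n -> 'M[R]_(n, p)) (g : 'cV[R]_n -> 'M[R]_(n, m))
  (V : 'cV[R]_n -> R) (c1 c2 c3 eps : R) : Prop :=
  [/\ 0 < c1, 0 < c2, 0 < c3 & 0 < eps] /\
  C1 V /\ V 0 = 0 /\ (forall x, x != 0 -> 0 < V x) /\ (forall x, 0 <= V x) /\
  (forall x, c1 * enorm x ^+ 2 <= V x /\ V x <= c2 * enorm x ^+ 2) /\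
  (forall x th, x != 0 ->
     (* inf_u (...) < bound  <=>  exists u, (...) < bound *)
     exists u : 'cV[R]_m,
       scal (LieV V f x) + scal (LieV V F x *m th) + scal (LieV V g x *m u)
       < - c3 * V x - eps^-1 * enorm (LieV V F x) ^+ 2).

End Defs.

Section Defs2.
Variable R : realType.
(* time derivative of V_theta along the estimation-error dynamics
   d/dt theta_tilde = - tau(theta - theta_tilde, t):
   Vdot(z, t) = dV_theta/dt (z,t) + grad_z V_theta(z,t) . (- tau(theta - z, t)) *)
Definition Vth_dot (p : nat) (Vth : 'cV[R]_p * R -> R)
  (tau : 'cV[R]_p -> R -> 'cV[R]_p) (theta : 'cV[R]_p) (z : 'cV[R]_p) (t : R) : R :=
  'd Vth (z, t) (- tau (theta - z) t, 1).
End Defs2.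

(* Main.v *)
Require Import Defs.
From HB Require Import structures.
From mathcomp Require Import all_boot all_order all_algebra.
From mathcomp Require Import all_classical all_reals all_analysis.
From mathcomp Require Import ring lra.
Import Order.TTheory GRing.Theory Num.Theory.
Import numFieldNormedType.Exports.
Local Open Scope classical_set_scope.
Local Open Scope ring_scope.

Lemma chainU (R : realType) (U : normedModType R) (y : R -> U) (W : U -> R) (t : R) (dy : U) :
  is_derive t 1 y dy -> differentiable W (y t) -> is_derive t 1 (W \o y) ('d W (y t) dy).
Proof.
move=> [yd <-] dW.
have dy' : differentiable y t by apply/derivable1_diffP.
apply: (@DeriveDef _ _ _ _ _ (W \o y)).
- by apply/derivable1_diffP/differentiable_comp.
- rewrite deriveE; last exact: differentiable_comp.
  by rewrite diff_comp //= [in RHS]deriveE.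
Qed.

Lemma dgrad (R : realType) n (V : 'cV[R]_n -> R) x v : differentiable V x ->
  'd V x v = scal (grad V x *m v).
Proof.
move=> _.
rewrite [in LHS](matrix_sum_delta v) linear_sum /scal mxE.
apply: eq_bigr => i _; rewrite big_ord1 linearZ /= !mxE /= mulrC.
by rewrite [ord0](ord1) .
Qed.

Lemma fin_nincr (R : realType) (h : R -> R) (s : seq R) : forall a b, a <= b ->
  {within `[a,b], continuous h} ->
  (forall t, a < t < b -> t \notin s -> derivable h t 1 /\ derive1 h t <= 0) -> h b <= h a.
Proof.
elim: s => [|x s IH] a b ab hc hd.
  apply: (ler0_derive1_nincr _ _ hc) => //.
  - by move=> t; rewrite in_itv /= => /hd[]//.
  - by move=> t; rewrite in_itv /= => /hd[]//.
have [xab|xab] := boolP (a < x < b); last first.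
  apply: IH => // t tab ts; apply: hd => //; rewrite in_cons negb_or ts andbT.
  by apply: contraNneq xab => <-.
case/andP: xab => ax xb.
apply: (@le_trans _ _ (h x)).
  apply: IH; first exact: ltW.
  - apply: continuous_subspaceW hc; apply: subset_itv; rewrite bnd_simp ?lexx ?ltW //.
  - move=> t /andP[xt tb] ts; apply: hd; first by rewrite tb (lt_trans ax xt).
    by rewrite in_cons negb_or ts andbT; rewrite neq_lt xt orbT.
apply: IH; first exact: ltW.
- apply: continuous_subspaceW hc; apply: subset_itv; rewrite bnd_simp ?lexx ?ltW //.
- move=> t /andP[a_t tx] ts; apply: hd; first by rewrite a_t (lt_trans tx xb).
  by rewrite in_cons negb_or ts andbT; rewrite neq_lt tx.
Qed.

Lemma exp_lin_derive (R : realType) (c t : R) :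
  is_derive t 1 (fun t => expR (c * t)) (c * expR (c * t)).
Proof.
have Hg : is_derive t (1:R) (fun t : R => c * t) (c * 1).
  exact: (is_deriveZ c (is_derive_id t 1)).
rewrite mulr1 in Hg.
have := @is_derive1_comp R expR (fun t => c * t) t (expR (c * t)) c (is_derive_expR _) Hg.
by rewrite mulrC.
Qed.

Lemma gronwall (R : realType) (w : R -> R) (a b c B : R) (s : seq R) :
  0 < c -> a <= b -> (forall t, a <= t <= b -> {for t, continuous w}) ->
  (forall t, a < t < b -> t \notin s ->
     exists dw, is_derive t 1 w dw /\ dw <= - c * w t + B) ->
  w b <= (w a - B / c) * expR (- c * (b - a)) + B / c.
Proof.
move=> c0 ab wc wd.
pose h := fun t => (w t - B / c) * expR (c * t).
have hd (t dw : R) : is_derive t 1 w dw ->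
    is_derive t 1 h ((dw + c * w t - B) * expR (c * t)).
  move=> Hw.
  have Hw' : is_derive t 1 (fun t => w t - B / c) (dw - 0).
    exact: (is_deriveB Hw (is_derive_cst (B/c) t 1)).
  rewrite subr0 in Hw'.
  have H : is_derive t 1 h ((w t - B/c) *: (c * expR (c*t)) + expR (c*t) *: dw).
    exact: (is_deriveM Hw' (exp_lin_derive _ c t)).
  apply: is_derive_eq H _.
  rewrite /GRing.scale /=; field; exact: lt0r_neq0.
have key : h b <= h a.
  apply: (@fin_nincr R h s a b ab).
  - have ec : continuous (fun x : R => expR (c * x)).
      move=> x; have [dd _] := exp_lin_derive R c x.
      exact/differentiable_continuous/derivable1_diffP.
    apply: continuous_in_subspaceT => t; rewrite inE /= in_itv /= => tab.
    apply: (continuousM (s := fun t => w t - B / c) (t := fun t => expR (c * t))); last exact: ec.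
    apply: (continuousB (f := w) (g := cst (B / c))); first exact: wc.
    exact: cst_continuous.
  - move=> t tab ts; have [dw [Hw Hle]] := wd t tab ts.
    have Hh := hd t dw Hw.
    split; first by case: Hh.
    rewrite derive1E derive_val.
    rewrite mulr_le0_ge0 ?expR_ge0 //.
    rewrite -subr_le0 in Hle; apply: le_trans Hle.
    by rewrite le_eqVlt; apply/orP; left; apply/eqP; ring.
rewrite /h in key.
have eb : 0 < expR (c * b) by exact: expR_gt0.
have E1 : expR (- c * (b - a)) * expR (c * b) = expR (c * a).
  by rewrite -expRD; congr expR; ring.
rewrite -(ler_pM2r eb) mulrDl -mulrA E1.
have -> : w b * expR (c * b) = (w b - B / c) * expR (c * b) + B / c * expR (c * b) by ring.
by rewrite lerD2r.
Qed.

Lemma pair_derive (R : realType) (U : normedModType R) (y : R -> U) (t : R) (dy : U) :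
  is_derive t 1 y dy -> is_derive t 1 (fun s => (y s, s)) (dy, 1).
Proof.
move=> [yd <-].
have dy' : differentiable y t by apply/derivable1_diffP.
have did : differentiable (@id R) t by case: (is_diff_id t).
apply: (@DeriveDef _ _ _ _ _ (fun s => (y s, s))).
  by apply/derivable1_diffP; exact: (differentiable_pair dy' did).
rewrite deriveE; last exact: (differentiable_pair dy' did).
rewrite (diff_pair dy' did) /= deriveE //.
by rewrite (@diff_val _ _ _ _ _ _ _ (is_diff_id t)).
Qed.

Lemma enorm_ge0 (R : realType) a b (M : 'M[R]_(a, b)) : 0 <= enorm M.
Proof. exact: sqrtr_ge0. Qed.

Lemma enorm_sq (R : realType) a b (M : 'M[R]_(a, b)) :
  enorm M ^+ 2 = \sum_(i < a) \sum_(j < b) (M i j) ^+ 2.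
Proof.
rewrite /enorm sqr_sqrtr //; apply: sumr_ge0 => i _; apply: sumr_ge0 => j _.
exact: sqr_ge0.
Qed.

Lemma amgm (R : realType) p (a : 'rV[R]_p) (b : 'cV[R]_p) (eps : R) : 0 < eps ->
  scal (a *m b) <= eps^-1 * enorm a ^+ 2 + eps / 4 * enorm b ^+ 2.
Proof.
move=> e0.
rewrite !enorm_sq /scal.
rewrite big_ord_recl big_ord0 addr0.
rewrite [X in X <= _](_ : _ = \sum_j a 0 j * b j 0); last by rewrite mxE.
have -> : \sum_(i < p) \sum_(j < 1) b i j ^+ 2 = \sum_(i < p) b i 0 ^+ 2.
  by apply: eq_bigr => i _; rewrite big_ord_recl big_ord0 addr0.
have -> : \sum_(j < p) a ord0 j ^+ 2 = \sum_(j < p) a 0 j ^+ 2 by [].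
rewrite !mulr_sumr -big_split /=; apply: ler_sum => j _.
rewrite -subr_ge0.
have -> : eps^-1 * a 0 j ^+ 2 + eps / 4 * b j 0 ^+ 2 - a 0 j * b j 0 =
   eps^-1 * (a 0 j - eps / 2 * b j 0) ^+ 2.
  by field; exact: lt0r_neq0.
by apply: mulr_ge0; [rewrite invr_ge0 ltW | exact: sqr_ge0].
Qed.

Lemma scalD (R : realType) (A B : 'M[R]_1) : scal (A + B) = scal A + scal B.
Proof. by rewrite /scal mxE. Qed.

Lemma dV_expand (R : realType) n m p (V : 'cV[R]_n -> R) (f : 'cV[R]_n -> 'cV[R]_n)
  (F : 'cV[R]_n -> 'M[R]_(n, p)) (g : 'cV[R]_n -> 'M[R]_(n, m)) x th u z :
  differentiable V x ->
  'd V x (f x + F x *m th + g x *m u + F x *m z) =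
  scal (LieV V f x) + scal (LieV V F x *m th) + scal (LieV V g x *m u)
  + scal (LieV V F x *m z).
Proof.
move=> dV; rewrite dgrad // /LieV !mulmxDr !mulmxA !scalD //.
Qed.

Lemma entry_le_enorm (R : realType) a b (M : 'M[R]_(a, b)) i j : `|M i j| <= enorm M.
Proof.
rewrite /enorm -sqrtr_sqr; apply: ler_wsqrtr.
rewrite (bigD1 i) //= (bigD1 j) //= -addrA lerDl.
apply: addr_ge0; first by apply: sumr_ge0 => k _; exact: sqr_ge0.
apply: sumr_ge0 => k _; apply: sumr_ge0 => l _; exact: sqr_ge0.
Qed.

Lemma mxnorm_le_enorm (R : realType) a b (M : 'M[R]_(a, b)) : `|M| <= enorm M.
Proof.
have -> : `|M| = mx_norm M by [].
rewrite mx_normrE.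
elim/big_ind: _ => //; first exact: enorm_ge0.
  by move=> x y Hx Hy; rewrite ge_max Hx Hy.
by move=> ij _; exact: entry_le_enorm.
Qed.
Arguments enorm_ge0 {R a b} M.
Arguments mxnorm_le_enorm {R a b} M.

Theorem theorem1 (R : realType) (n m p : nat)
  (f : 'cV[R]_n -> 'cV[R]_n) (F : 'cV[R]_n -> 'M[R]_(n, p))
  (g : 'cV[R]_n -> 'M[R]_(n, m)) (theta : 'cV[R]_p)
  (tau : 'cV[R]_p -> R -> 'cV[R]_p)
  (Vth : 'cV[R]_p * R -> R) (eta1 eta2 eta3 T : R)
  (V : 'cV[R]_n -> R) (c1 c2 c3 eps : R)
  (k : 'cV[R]_n -> 'cV[R]_p -> 'cV[R]_m) :
  (* plant *)
  loc_lipschitz_on setT f -> loc_lipschitz_on setT F -> loc_lipschitz_on setT g ->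
  f 0 = 0 -> F 0 = 0 ->
  (* update law *)
  (forall t : R, 0 <= t -> loc_lipschitz_on setT (fun z => tau z t)) ->
  (forall z, pw_continuous (tau z)) ->
  (* estimator Lyapunov function *)
  C1 Vth -> (forall z (t : R), 0 <= t -> 0 <= Vth (z, t)) ->
  0 < eta1 -> 0 < eta2 -> 0 < eta3 -> 0 <= T ->
  (forall z (t : R), 0 <= t ->
     eta1 * enorm z ^+ 2 <= Vth (z, t) /\ Vth (z, t) <= eta2 * enorm z ^+ 2) ->
  (forall z (t : R), 0 <= t -> Vth_dot Vth tau theta z t <= 0) ->
  (forall z (t : R), T <= t -> Vth_dot Vth tau theta z t <= - eta3 * enorm z ^+ 2) ->
  (* eISS-CLF and controller *)
  eISS_CLF f F g V c1 c2 c3 eps ->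
  loc_lipschitz_on [set xt : 'cV[R]_n * 'cV[R]_p | xt.1 != 0]
    (fun xt => k xt.1 xt.2) ->
  (forall x th,
     scal (LieV V f x) + scal (LieV V F x *m th) + scal (LieV V g x *m k x th)
     <= - c3 * V x - eps^-1 * enorm (LieV V F x) ^+ 2) ->
  (* conclusion 1: eISS of the closed loop w.r.t. theta_tilde *)
  (exists c lam : R, 0 < c /\ 0 < lam /\ exists iota : R -> R, K_inf iota /\
     forall (tt : R -> 'cV[R]_p) (x : R -> 'cV[R]_n),
       (exists M : R, forall t : R, 0 <= t -> enorm (tt t) <= M) ->
       (forall t : R, 0 <= t -> is_derive t 1 x
          (f (x t) + F (x t) *m (theta - tt t)
           + g (x t) *m k (x t) (theta - tt t) + F (x t) *m tt t)) ->
       forall t : R, 0 <= t ->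
         enorm (x t) <= c * enorm (x 0) * expR (- lam * t)
                        + iota (sup [set enorm (tt s) | s in [set s : R | 0 <= s]]))
  /\
  (* conclusion 2: with the estimator running, x(t) -> 0 *)
  (forall (thhat : R -> 'cV[R]_p) (x : R -> 'cV[R]_n),
     (forall t : R, 0 <= t -> {for t, continuous thhat}) ->
     (forall b : R, exists s : seq R, forall t : R, 0 <= t <= b -> t \notin s ->
        is_derive t 1 thhat (tau (thhat t) t)) ->
     (forall t : R, 0 <= t -> is_derive t 1 x
        (f (x t) + F (x t) *m thhat t
         + g (x t) *m k (x t) (thhat t) + F (x t) *m (theta - thhat t))) ->
     x t @[t --> +oo] --> (0 : 'cV[R]_n)).
Proof.
move=> fL FL gL f0 F0 tauL tauC Vth1 Vth0 e1 e2 e3 T0 Vthb Vthd0 VthdT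
  [[c10 c20 c30 eps0] [[Vdiff _] [V0 [Vpos [Vge0 [Vb _]]]]]] kL Hk.
have Hdv : forall (xf : R -> 'cV[R]_n) (t : R) (th z : 'cV[R]_p),
    is_derive t 1 xf (f (xf t) + F (xf t) *m th + g (xf t) *m k (xf t) th + F (xf t) *m z) ->
    exists dv : R, is_derive t 1 (V \o xf) dv /\
      dv <= - c3 * V (xf t) + eps / 4 * enorm z ^+ 2.
  move=> xf t th z Hx.
  exists ('d V (xf t) (f (xf t) + F (xf t) *m th + g (xf t) *m k (xf t) th + F (xf t) *m z)).
  split; first exact: chainU Hx (Vdiff _).
  rewrite dV_expand //.
  have := Hk (xf t) th; have := @amgm R p (LieV V F (xf t)) z eps eps0.
  lra.
have Vcont : forall (xf : R -> 'cV[R]_n) (t : R) dv, is_derive t 1 (V \o xf) dv ->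
    {for t, continuous (V \o xf)}.
  move=> xf t dv [dd _].
  exact/differentiable_continuous/derivable1_diffP.
split.
  pose K := Num.sqrt (eps / (4 * c1 * c3)).
  have K0 : 0 < K by rewrite sqrtr_gt0 !divr_gt0 ?mulr_gt0.
  exists (Num.sqrt (c2 / c1)), (c3 / 2).
  split; first by rewrite sqrtr_gt0 divr_gt0.
  split; first by rewrite divr_gt0.
  exists (fun r => K * r); split.
    split; first by rewrite mulr0.
    split.
      apply: continuous_subspaceT => r.
      apply: (continuousM (s := cst K) (t := id)); [exact: cst_continuous | exact: cvg_id].
    split; first by move=> r s _ rs; rewrite ltr_pM2l.
    move=> M; exists ((`|M| + 1) / K); split.
      by rewrite divr_ge0 ?ltW // addr_ge0.
    rewrite mulrC divfK ?lt0r_neq0 //.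
    by apply: (le_lt_trans (ler_norm M)); rewrite ltrDl.
  move=> tt x [M0 HM] Hx t t0.
  set S := sup _.
  have hs : has_sup [set enorm (tt s) | s in [set s : R | 0 <= s]].
    rewrite /has_sup.
    split; first by exists (enorm (tt 0)); exists 0; rewrite /= ?lexx.
    by exists M0 => _ [s s0 <-]; exact: HM.
  have HS : forall s : R, 0 <= s -> enorm (tt s) <= S.
    by move=> s s0; apply: sup_upper_bound => //; exists s.
  have S0 : 0 <= S := le_trans (enorm_ge0 _) (HS 0 (lexx 0)).
  pose B := eps / 4 * S ^+ 2.
  have Hw : forall s : R, 0 <= s -> exists dv : R, is_derive s 1 (V \o x) dv /\
      dv <= - c3 * (V \o x) s + B.
    move=> s s0; have [dv [Hd Hle]] := Hdv x s (theta - tt s) (tt s) (Hx s s0).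
    exists dv; split => //; apply: (le_trans Hle); rewrite lerD2l /B ler_pM2l ?divr_gt0 //.
    by rewrite !expr2; apply: ler_pM; rewrite ?enorm_ge0 ?HS.
  have G := @gronwall R (V \o x) 0 t c3 B [::] c30 t0.
  have {G} G : V (x t) <= (V (x 0) - B / c3) * expR (- c3 * (t - 0)) + B / c3.
    apply: G.
      move=> s /andP[s0 _]; have [dv [Hd _]] := Hw s s0; exact: Vcont Hd.
    by move=> s /andP[s0 _] _; apply: Hw; rewrite ltW.
  rewrite subr0 in G.
  set E := expR (- c3 * t) in G.
  set Eh := expR (- (c3 / 2) * t).
  have EE : Eh ^+ 2 = E by rewrite /Eh /E expr2 -expRD; congr expR; field.
  have E0 : 0 < E by exact: expR_gt0.
  have Eh0 : 0 < Eh by exact: expR_gt0.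
  have [Vxt1 _] := Vb (x t).
  have [_ Vx02] := Vb (x 0).
  set X := enorm (x t) in Vxt1 *.
  set X0 := enorm (x 0) in Vx02 *.
  have X0ge : 0 <= X0 by exact: enorm_ge0.
  have Xge : 0 <= X by exact: enorm_ge0.
  have sq1 : Num.sqrt (c2 / c1) ^+ 2 = c2 / c1 by rewrite sqr_sqrtr // ltW // divr_gt0.
  have sq2 : K ^+ 2 = eps / (4 * c1 * c3) by rewrite sqr_sqrtr // ltW // !divr_gt0 ?mulr_gt0.
  have HX2 : X ^+ 2 <= (Num.sqrt (c2 / c1) * X0 * Eh + K * S) ^+ 2.
    have H1 : c1 * X ^+ 2 <= c2 * X0 ^+ 2 * E + B / c3.
      apply: (le_trans Vxt1); apply: (le_trans G).
      have BE : 0 <= B / c3 * E.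
        apply: mulr_ge0; last exact: ltW.
        apply: divr_ge0; last exact: ltW.
        by apply: mulr_ge0; [apply: divr_ge0; lra | exact: sqr_ge0].
      have : V (x 0) * E <= c2 * X0 ^+ 2 * E by rewrite ler_pM2r.
      rewrite mulrBl; lra.
    have H2 : X ^+ 2 <= (Num.sqrt (c2 / c1) * X0 * Eh) ^+ 2 + (K * S) ^+ 2.
      rewrite !exprMn sq1 sq2 EE -(ler_pM2l c10).
      apply: (le_trans H1); rewrite /B le_eqVlt; apply/orP; left; apply/eqP.
      field; rewrite !lt0r_neq0 //.
    apply: (le_trans H2).
    have : 0 <= Num.sqrt (c2 / c1) * X0 * Eh * (K * S).
      apply: mulr_ge0; [apply: mulr_ge0; [apply: mulr_ge0; [exact: sqrtr_ge0| exact: X0ge] | exact: ltW] | apply: mulr_ge0; [exact: ltW | exact: S0]].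
    move=> HH; rewrite sqrrD; lra.
  rewrite -ler_sqr ?nnegrE //.
  apply: addr_ge0; last by apply: mulr_ge0; [exact: ltW | exact: S0].
  apply: mulr_ge0; [apply: mulr_ge0; [exact: sqrtr_ge0| exact: X0ge] | exact: ltW].
move=> thh x thc thd Hx.
pose lam := eps / (2 * eta3).
pose q := eta3 / (2 * eta2).
pose kap := Num.min c3 q.
have lam0 : 0 < lam by rewrite divr_gt0 // mulr_gt0.
have q0 : 0 < q by rewrite divr_gt0 // mulr_gt0.
have kap0 : 0 < kap by rewrite lt_min c30 q0.
have kapc3 : kap <= c3 by rewrite ge_min lexx.
have kapq : kap <= q by rewrite ge_min lexx orbT.
pose W := fun t => Vth (theta - thh t, t).
pose U := fun t => V (x t) + lam * W t.
have Ucont : forall t, 0 <= t -> {for t, continuous U}.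
  move=> t t0.
  apply: (continuousD (f := V \o x) (g := fun t => lam * W t)).
    have [dv [Hd _]] := Hdv x t (thh t) (theta - thh t) (Hx t t0).
    exact: Vcont Hd.
  apply: (continuousM (s := cst lam) (t := W)); first exact: cst_continuous.
  apply: (continuous_comp (f := fun r => (theta - thh r, r)) (g := Vth)).
    apply: (@cvg_pair _ _ _ _ (nbhs (theta - thh t)) (nbhs t)); last exact: cvg_id.
    apply: (continuousB (f := cst theta) (g := thh)); first exact: cst_continuous.
    exact: thc.
  exact/differentiable_continuous/(Vth1.1).
have UT : forall t, T <= t -> U t <= U T * expR (- kap * (t - T)).
  move=> t Tt.
  have [sq Hsq] := thd t.
  have G := @gronwall R U T t kap 0 sq kap0 Tt.
  rewrite mul0r subr0 addr0 in G; apply: G.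
    move=> r /andP[Tr _]; apply: Ucont; exact: le_trans Tr.
  move=> r /andP[Tr rt] rs.
  have r0 : 0 <= r by apply: le_trans (ltW Tr).
  have HthD : is_derive r 1 thh (tau (thh r) r).
    by apply: Hsq => //; rewrite r0 ltW.
  have Htt : is_derive r 1 (fun r => theta - thh r) (0 - tau (thh r) r).
    exact: (is_deriveB (is_derive_cst theta r 1) HthD).
  rewrite sub0r in Htt.
  have HW := @chainU R _ _ Vth _ _ (@pair_derive R _ _ _ _ Htt) (Vth1.1 _).
  have [dv [HV Hdvle]] := Hdv x r (thh r) (theta - thh r) (Hx r r0).
  set dw := 'd Vth _ _ in HW.
  have Hdw : dw <= - eta3 * enorm (theta - thh r) ^+ 2.
    have := VthdT (theta - thh r) r (ltW Tr).
    rewrite /Vth_dot; have -> : theta - (theta - thh r) = thh r by rewrite opprB addrC subrK.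
    by [].

  have HU : is_derive r 1 U (dv + lam *: dw).
    exact: (is_deriveD HV (is_deriveZ lam HW)).
  exists (dv + lam *: dw); split => //.
  set Z := enorm (theta - thh r) ^+ 2 in Hdvle Hdw.
  have [_ WZ] := Vthb (theta - thh r) r r0.
  have W0 : 0 <= W r by exact: Vth0.
  have V0' : 0 <= V (x r) by exact: Vge0.
  have h1 : lam * dw <= lam * (- eta3 * Z) by rewrite ler_pM2l.
  have h2 : lam * (- eta3 * Z) = - (eps / 2) * Z by rewrite /lam; field; exact: lt0r_neq0.
  have h3 : kap * V (x r) <= c3 * V (x r) by exact: ler_wpM2r.
  have h4 : kap * (lam * W r) <= q * (lam * W r).
    by apply: ler_wpM2r => //; apply: mulr_ge0 => //; exact: ltW.
  have h5 : q * (lam * W r) = eps / (4 * eta2) * W r.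
    by rewrite /q /lam; field; rewrite !lt0r_neq0.
  have h6 : eps / (4 * eta2) * W r <= eps / (4 * eta2) * (eta2 * Z).
    by apply: ler_wpM2l => //; apply: divr_ge0; [exact: ltW | apply: mulr_ge0; lra].
  have h7 : eps / (4 * eta2) * (eta2 * Z) = eps / 4 * Z.
    by field; rewrite !lt0r_neq0.
  rewrite /GRing.scale /= addr0 /U mulNr mulrDr.
  lra.
have UT0 : 0 <= U T.
  apply: addr_ge0; first exact: Vge0.
  by apply: mulr_ge0; [exact: ltW | exact: Vth0].
apply/cvgr0Pnorm_lt => e e0.
pose M := T + U T / (kap * c1 * e ^+ 2).
have ce0 : 0 < kap * c1 * e ^+ 2 by rewrite !mulr_gt0 // exprn_gt0.
exists M; split; first exact: num_real.
move=> t Mt.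
have Tt : T < t.
  apply: le_lt_trans Mt; rewrite /M lerDl divr_ge0 //; exact: ltW.
have t0 : 0 <= t by apply: le_trans (ltW Tt).
apply: (le_lt_trans (mxnorm_le_enorm (x t))).
have X0 := enorm_ge0 (x t).
have [Vx1 _] := Vb (x t).
have HVU : V (x t) <= U t.
  by rewrite /U lerDl; apply: mulr_ge0; [exact: ltW | exact: Vth0].
have HU := UT t (ltW Tt).
set y := kap * (t - T) in HU.
have Ey : expR (- kap * (t - T)) * expR y = 1 by rewrite /y -expRD mulNr addNr expR0.
have y1 : U T < c1 * e ^+ 2 * y.
  rewrite /y; move: Mt; rewrite /M -ltrBrDl => Mt.
  rewrite ltr_pdivrMr // in Mt.
  by have -> : c1 * e ^+ 2 * (kap * (t - T)) = (t - T) * (kap * c1 * e ^+ 2) by ring.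
have ey : y < expR y.
  by apply: lt_le_trans (expR_ge1Dx y); rewrite ltrDr.
have E0 : 0 < expR y by exact: expR_gt0.
have H : c1 * enorm (x t) ^+ 2 * expR y < c1 * e ^+ 2 * expR y.
  apply: le_lt_trans (_ : U T < _).
    apply: (le_trans (_ : _ <= U t * expR y)).
      by rewrite ler_pM2r //; apply: le_trans HVU.
    by apply: (le_trans (_ : _ <= U T * expR (- kap * (t - T)) * expR y));
      [rewrite ler_pM2r | rewrite -mulrA Ey mulr1].
  apply: lt_le_trans y1 _.
  by rewrite ler_pM2l ?ltW // mulr_gt0 // exprn_gt0.
rewrite ltr_pM2r // ltr_pM2l // in H.
by rewrite -ltr_sqr ?nnegrE // ltW.
Qed.
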